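(* For $N\in\mathbb{N}$ and $z,w\in\mathbb{C}$ let $K_N(z,w)=\sum_{m=0}^{N-1}\frac{N^m}{m!}(z\overline w)^m$. For every $\lambda\in(0,1)$ there are a constant $C(\lambda)>0$ and a constant $\delta(\lambda)\in(0,1)$ such that for all $N\in\mathbb{N}$ and all $z,w\in\mathbb{C}$ with $|z|,|w|<\lambda$, $$\big|e^{Nz\overline w}-K_N(z,w)\big|\le C\,\frac{e^{N|z\overline w|}}{\sqrt N}\,\delta^N .$$ *)

(* Defs.v *)
From Stdlib Require Import Reals Factorial.
From Coquelicot Require Import Coquelicot.
Open Scope R_scope.

Definition cexp (z : C) : C :=
  (exp (Re z) * cos (Im z), exp (Re z) * sin (Im z)).

Fixpoint cpow (z : C) (n : nat) : C :=
  match n with O => RtoC 1 | S k => Cmult (cpow z k) z end.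

Fixpoint csum (f : nat -> C) (n : nat) : C :=
  match n with O => RtoC 0 | S k => Cplus (csum f k) (f k) end.

Definition KN (N : nat) (z w : C) : C :=
  csum (fun m => Cmult (RtoC (INR N ^ m / INR (fact m))) (cpow (Cmult z (Cconj w)) m)) N.

(* Main.v *)
Require Import Defs.
From Stdlib Require Import Reals.
From Coquelicot Require Import Coquelicot.
From Stdlib Require Import Factorial Lra Lia.
Open Scope R_scope.

Fixpoint rsum (f : nat -> R) (n : nat) : R :=
  match n with O => 0 | S k => rsum f k + f k end.

Definition Poly (c : nat -> R) (n : nat) (t : R) : R :=
  rsum (fun m => t ^ m / INR (fact m) * c m) n.

Lemma rsum_ext f g n : (forall m, (m < n)%nat -> f m = g m) -> rsum f n = rsum g n.
Proof.
  induction n; intros H; simpl; auto.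
  rewrite IHn; [rewrite H; auto|]; intros; apply H; lia.
Qed.

Lemma rsum_lin al be f g n :
  rsum (fun m => al * f m + be * g m) n = al * rsum f n + be * rsum g n.
Proof. induction n; simpl; [ring|rewrite IHn; ring]. Qed.

Lemma Poly_lin al be c1 c2 n t :
  Poly (fun m => al * c1 m + be * c2 m) n t = al * Poly c1 n t + be * Poly c2 n t.
Proof.
  unfold Poly. rewrite <- rsum_lin. apply rsum_ext; intros; ring.
Qed.

Lemma Poly_ext c1 c2 n t : (forall m, c1 m = c2 m) -> Poly c1 n t = Poly c2 n t.
Proof. intros H; unfold Poly; apply rsum_ext; intros; rewrite H; auto. Qed.

Lemma Poly_0 c n : Poly c (S n) 0 = c 0%nat.
Proof.
  induction n. unfold Poly; simpl; field.
  unfold Poly in *. change (rsum (fun m : nat => 0 ^ m / INR (fact m) * c m) (S (S n))) with (rsum (fun m : nat => 0 ^ m / INR (fact m) * c m) (S n) + 0 ^ (S n) / INR (fact (S n)) * c (S n)).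
  rewrite IHn. rewrite pow_i by lia. unfold Rdiv; ring.
Qed.

Lemma term_derive n k t :
  is_derive (fun t => t ^ S n / INR (fact (S n)) * k) t (t ^ n / INR (fact n) * k).
Proof.
  auto_derive. auto.
  change (INR (fact n + n * fact n)) with (INR (S n * fact n)).
  change (match n with 0%nat => 1 | S _ => INR n + 1 end) with (INR (S n)).
  rewrite mult_INR.
  field. split. apply INR_fact_neq_0. apply not_0_INR; lia.
Qed.

Lemma Poly_derive c n t :
  is_derive (Poly c (S n)) t (Poly (fun m => c (S m)) n t).
Proof.
  induction n.
  - unfold Poly; simpl. auto_derive; auto; ring.
  - unfold Poly at 2. simpl rsum. fold (Poly (fun m => c (S m)) n t).
    unfold Poly. simpl rsum. fold (Poly c (S n)).
    apply (is_derive_plus (Poly c (S n)) (fun t => t ^ S n / INR (fact (S n)) * c (S n))).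
    exact IHn. apply term_derive.
Qed.

Lemma incr_deriv (h h' : R -> R) (t1 : R) : 0 <= t1 ->
  (forall t, is_derive h t (h' t)) -> (forall t, 0 <= t <= t1 -> 0 <= h' t) ->
  h 0 <= h t1.
Proof.
  intros Ht Hd Hp.
  destruct (MVT_gen h 0 t1 h') as [c [Hc E]].
  - intros; apply Hd.
  - intros; apply continuity_pt_filterlim. apply (ex_derive_continuous h).
    eexists; apply Hd.
  - rewrite Rmin_left in Hc by lra. rewrite Rmax_right in Hc by lra.
    assert (0 <= h' c) by (apply Hp; lra). nra.
Qed.

Lemma is_derive_eq (f : R -> R) t l l' : is_derive f t l -> l = l' -> is_derive f t l'.
Proof. intros H ->; exact H. Qed.

Definition pr (x : C) m := fst (cpow x m).
Definition pim (x : C) m := snd (cpow x m).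
Definition Fc x n t := exp (t * fst x) * cos (t * snd x) - Poly (pr x) n t.
Definition Gc x n t := exp (t * fst x) * sin (t * snd x) - Poly (pim x) n t.
Definition gc x n t := exp (t * Cmod x) - Poly (fun m => Cmod x ^ m) n t.

Lemma pr_S x m : pr x (S m) = fst x * pr x m + (- snd x) * pim x m.
Proof. unfold pr, pim; simpl. ring. Qed.
Lemma pim_S x m : pim x (S m) = snd x * pr x m + fst x * pim x m.
Proof. unfold pr, pim; simpl. ring. Qed.

Lemma Fc_der x n t : is_derive (Fc x (S n)) t (fst x * Fc x n t - snd x * Gc x n t).
Proof.
  unfold Fc.
  eapply is_derive_eq.
  apply (is_derive_minus (fun t => exp (t * fst x) * cos (t * snd x)) (Poly (pr x) (S n)) t
     (fst x * (exp (t * fst x) * cos (t * snd x)) - snd x * (exp (t * fst x) * sin (t * snd x)))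
     (Poly (fun m => pr x (S m)) n t)).
  auto_derive; auto; ring.
  apply Poly_derive.
  rewrite (Poly_ext _ _ _ _ (pr_S x)), Poly_lin. unfold Gc. unfold minus, plus, opp; simpl. ring.
Qed.

Lemma Gc_der x n t : is_derive (Gc x (S n)) t (snd x * Fc x n t + fst x * Gc x n t).
Proof.
  unfold Gc.
  eapply is_derive_eq.
  apply (is_derive_minus (fun t => exp (t * fst x) * sin (t * snd x)) (Poly (pim x) (S n)) t
     (snd x * (exp (t * fst x) * cos (t * snd x)) + fst x * (exp (t * fst x) * sin (t * snd x)))
     (Poly (fun m => pim x (S m)) n t)).
  auto_derive; auto; ring.
  apply Poly_derive.
  rewrite (Poly_ext _ _ _ _ (pim_S x)), Poly_lin. unfold Fc. unfold minus, plus, opp; simpl. ring.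
Qed.

Lemma gc_der x n t : is_derive (gc x (S n)) t (Cmod x * gc x n t).
Proof.
  unfold gc.
  eapply is_derive_eq.
  apply (is_derive_minus (fun t => exp (t * Cmod x)) (Poly (fun m => Cmod x ^ m) (S n)) t
     (Cmod x * exp (t * Cmod x))
     (Poly (fun m => Cmod x ^ S m) n t)).
  auto_derive; auto; ring.
  apply Poly_derive.
  rewrite (Poly_ext (fun m => Cmod x ^ S m) (fun m => Cmod x * Cmod x ^ m + 0 * 0) n t) by (intros; simpl pow; ring).
  rewrite Poly_lin. unfold minus, plus, opp; simpl. replace (Poly (pow (Cmod x)) n t) with (Poly (fun m => Cmod x ^ m) n t) by reflexivity. ring.
Qed.

Lemma CS c1 c2 u v : c1 * u + c2 * v <= sqrt (c1^2 + c2^2) * sqrt (u^2 + v^2).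
Proof.
  rewrite <- sqrt_mult_alt by nra.
  destruct (Rle_or_lt (c1 * u + c2 * v) 0). 
  - apply Rle_trans with 0; auto; apply sqrt_pos.
  - rewrite <- (sqrt_pow2 (c1 * u + c2 * v)) by lra.
    apply sqrt_le_1_alt. pose proof (pow2_ge_0 (c1*v - c2*u)). nra.
Qed.

Lemma rot_norm a b f g :
  sqrt ((a * f - b * g)^2 + (b * f + a * g)^2) = sqrt (a^2 + b^2) * sqrt (f^2 + g^2).
Proof. rewrite <- sqrt_mult_alt by nra. f_equal; ring. Qed.

Lemma Fc0 x n : Fc x (S n) 0 = 0.
Proof. unfold Fc. rewrite Poly_0. unfold pr; simpl. rewrite !Rmult_0_l, exp_0, cos_0. ring. Qed.
Lemma Gc0 x n : Gc x (S n) 0 = 0.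
Proof. unfold Gc. rewrite Poly_0. unfold pim; simpl. rewrite !Rmult_0_l, exp_0, sin_0. ring. Qed.
Lemma gc0 x n : gc x (S n) 0 = 0.
Proof. unfold gc. rewrite Poly_0. simpl. rewrite !Rmult_0_l, exp_0. ring. Qed.

Lemma main_cmp x n : forall t, 0 <= t -> sqrt (Fc x n t ^ 2 + Gc x n t ^ 2) <= gc x n t.
Proof.
  induction n; intros t Ht.
  - unfold Fc, Gc, gc, Poly; simpl rsum.
    replace ((exp (t * fst x) * cos (t * snd x) - 0) ^ 2 + (exp (t * fst x) * sin (t * snd x) - 0) ^ 2)
      with (exp (t * fst x) ^ 2) by (pose proof (sin2_cos2 (t * snd x)); unfold Rsqr in *; nra).
    rewrite sqrt_pow2 by (apply Rlt_le, exp_pos).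
    assert (fst x <= Cmod x) by (pose proof (re_le_Cmod x); unfold Re in *; pose proof (Rle_abs (fst x)); lra).
    apply Rmult_le_compat_l with (r := t) in H; auto.
    destruct (Req_dec (t * fst x) (t * Cmod x)) as [E|E]. rewrite E; lra.
    rewrite Rminus_0_r; left; apply exp_increasing; lra.
  - assert (Hs : 0 <= Cmod x) by apply Cmod_ge_0.
    assert (Hg : forall t, 0 <= t -> 0 <= gc x n t).
    { intros; apply Rle_trans with (2 := IHn t0 H); apply sqrt_pos. }
    assert (Hg1 : 0 <= gc x (S n) t).
    { rewrite <- (gc0 x n). apply (incr_deriv _ (fun t => Cmod x * gc x n t)); auto.
      apply gc_der. intros; apply Rmult_le_pos; auto. apply Hg; lra. }
    set (c1 := Fc x (S n) t). set (c2 := Gc x (S n) t).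
    set (M := sqrt (c1 ^ 2 + c2 ^ 2)).
    assert (HM : 0 <= M) by apply sqrt_pos.
    assert (Key : c1 * c1 + c2 * c2 <= M * gc x (S n) t).
    { pose (h := fun t => M * gc x (S n) t - (c1 * Fc x (S n) t + c2 * Gc x (S n) t)).
      assert (h 0 <= h t).
      { apply (incr_deriv h (fun t => M * (Cmod x * gc x n t) -
           (c1 * (fst x * Fc x n t - snd x * Gc x n t) + c2 * (snd x * Fc x n t + fst x * Gc x n t)))); auto.
        - intros t0. unfold h. eapply is_derive_eq.
          apply (is_derive_minus (fun t => M * gc x (S n) t) (fun t => c1 * Fc x (S n) t + c2 * Gc x (S n) t)).
          apply (is_derive_scal (gc x (S n)) t0 M), gc_der.
          apply (is_derive_plus (fun t => c1 * Fc x (S n) t) (fun t => c2 * Gc x (S n) t)).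
          apply (is_derive_scal (Fc x (S n)) t0 c1), Fc_der.
          apply (is_derive_scal (Gc x (S n)) t0 c2), Gc_der.
          unfold minus, plus, opp, scal; simpl. unfold mult; simpl. ring.
        - intros t0 Ht0.
          pose proof (CS c1 c2 (fst x * Fc x n t0 - snd x * Gc x n t0) (snd x * Fc x n t0 + fst x * Gc x n t0)).
          rewrite rot_norm in H. fold M in H.
          assert (sqrt (fst x ^ 2 + snd x ^ 2) = Cmod x) by reflexivity.
          rewrite H0 in H.
          pose proof (IHn t0 (proj1 Ht0)).
          assert (M * Cmod x * sqrt (Fc x n t0 ^ 2 + Gc x n t0 ^ 2) <= M * (Cmod x * gc x n t0)).
          { rewrite Rmult_assoc. apply Rmult_le_compat_l; auto. apply Rmult_le_compat_l; auto. }
          lra. }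
      unfold h in H. rewrite Fc0, Gc0, gc0 in H. unfold c1, c2 in *. lra. }
    destruct (Req_dec M 0) as [E|E].
    + rewrite <- E in Hg1. exact Hg1.
    + assert (M * M = c1 * c1 + c2 * c2).
      { unfold M. rewrite sqrt_sqrt by nra. ring. }
      assert (0 < M) by lra.
      apply Rmult_le_reg_l with M; auto. nra.
Qed.

Lemma sum_rsum g n : sum_f_R0 g n = rsum g (S n).
Proof. induction n; simpl; [ring|]. simpl in IHn. rewrite IHn. reflexivity. Qed.

Lemma rsum_mono f n k : (forall m, 0 <= f m) -> rsum f n <= rsum f (n + k).
Proof.
  intros H; induction k. rewrite Nat.add_0_r; lra.
  rewrite Nat.add_succ_r; simpl. specialize (H (n+k)%nat). lra.
Qed.

Lemma tail_bound s r N : 0 <= r < 1 -> 0 <= s <= INR N * r ->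
  exp s - Poly (fun m => s ^ m) N 1 <= s ^ N / INR (fact N) / (1 - r).
Proof.
  intros Hr Hs.
  set (f := fun m => s ^ m / INR (fact m)).
  assert (Hf : forall m, 0 <= f m).
  { intros; unfold f. apply Rmult_le_pos. apply pow_le; lra.
    apply Rlt_le, Rinv_0_lt_compat, INR_fact_lt_0. }
  assert (HP : Poly (fun m => s ^ m) N 1 = rsum f N).
  { unfold Poly; apply rsum_ext; intros; unfold f; rewrite pow1; field. apply INR_fact_neq_0. }
  assert (Hstep : forall k, f (N + k)%nat <= f N * r ^ k).
  { induction k. rewrite Nat.add_0_r; simpl; lra.
    rewrite Nat.add_succ_r. unfold f at 1.
    change (fact (S (N + k))) with (S (N + k) * fact (N + k))%nat.
    rewrite mult_INR. simpl pow. rewrite (Rmult_comm s (s ^ (N + k))).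
    assert (s <= INR (S (N + k)) * r).
    { rewrite S_INR, plus_INR. pose proof (pos_INR k). nra. }
    assert (0 < INR (S (N + k))) by (apply lt_0_INR; lia).
    assert (s ^ (N + k) * s / (INR (S (N + k)) * INR (fact (N + k))) <= f (N + k)%nat * r).
    { unfold f. assert (0 < INR (fact (N+k))) by apply INR_fact_lt_0.
      assert (0 <= s ^ (N + k)) by (apply pow_le; lra).
      unfold Rdiv. rewrite Rinv_mult.
      replace (s ^ (N + k) * s * (/ INR (S (N + k)) * / INR (fact (N + k)))) with
        (s ^ (N + k) * / INR (fact (N + k)) * (s / INR (S (N + k)))) by (unfold Rdiv; ring).
      apply Rmult_le_compat_l. apply Rmult_le_pos; auto. apply Rlt_le, Rinv_0_lt_compat; auto.
      apply Rmult_le_reg_l with (INR (S (N + k))); auto. field_simplify; lra. }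
    assert (0 <= f N) by auto.
    apply Rle_trans with (1 := H1). replace (f N * (r * r ^ k)) with (f N * r ^ k * r) by ring.
    apply Rmult_le_compat_r; lra. }
  assert (Hsum : forall k, rsum f (N + k) <= rsum f N + f N * (1 - r ^ k) / (1 - r)).
  { induction k. rewrite Nat.add_0_r; simpl. unfold Rdiv; rewrite Rminus_diag; lra.
    rewrite Nat.add_succ_r; simpl rsum. specialize (Hstep k).
    replace (f N * (1 - r ^ S k) / (1 - r)) with (f N * (1 - r ^ k) / (1 - r) + f N * r ^ k)
      by (simpl; field; lra). lra. }
  assert (Hall : forall n, rsum f n <= rsum f N + f N / (1 - r)).
  { intros n. assert (0 <= f N) by auto.
    assert (f N * (1 - r ^ (n - N)) / (1 - r) <= f N / (1 - r)).
    { unfold Rdiv. apply Rmult_le_compat_r. apply Rlt_le, Rinv_0_lt_compat; lra.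
      assert (0 <= r ^ (n - N)) by (apply pow_le; lra). nra. }
    assert (0 <= f N / (1 - r)) by (apply Rmult_le_pos; auto; apply Rlt_le, Rinv_0_lt_compat; lra).
    destruct (Compare_dec.le_lt_dec N n).
    - replace n with (N + (n - N))%nat by lia. specialize (Hsum (n - N)%nat).
      replace (N + (n - N) - N)%nat with (n - N)%nat in * by lia. lra.
    - pose proof (rsum_mono f n (N - n) Hf). replace (n + (N - n))%nat with N in H2 by lia. lra. }
  assert (Hexp : exp s <= rsum f N + f N / (1 - r)).
  { unfold exp. destruct (exist_exp s) as [l Hl]. simpl.
    assert (Hc : is_lim_seq (fun n => sum_f_R0 (fun i => / INR (fact i) * s ^ i) n) l).
    { apply is_lim_seq_Reals. exact Hl. }
    assert (Hk : is_lim_seq (fun _ : nat => rsum f N + f N / (1 - r)) (rsum f N + f N / (1 - r))) by apply is_lim_seq_const.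
    assert (Hle : forall n, sum_f_R0 (fun i => / INR (fact i) * s ^ i) n <= rsum f N + f N / (1 - r)).
    2:{ pose proof (is_lim_seq_le _ _ _ _ Hle Hc Hk) as HH. simpl in HH. apply HH. }
    intros n. rewrite sum_rsum.
    replace (rsum (fun i : nat => / INR (fact i) * s ^ i) (S n)) with (rsum f (S n)).
    apply Hall. apply rsum_ext; intros; unfold f; unfold Rdiv; ring. }
  rewrite HP. change (f N) with (s ^ N / INR (fact N)) in Hexp. lra.
Qed.

Lemma fst_csum f n : fst (csum f n) = rsum (fun m => fst (f m)) n.
Proof. induction n; simpl; auto. rewrite IHn; auto. Qed.
Lemma snd_csum f n : snd (csum f n) = rsum (fun m => snd (f m)) n.
Proof. induction n; simpl; auto. rewrite IHn; auto. Qed.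

Lemma cpow_scal c u m : cpow (Cmult (RtoC c) u) m = Cmult (RtoC (c ^ m)) (cpow u m).
Proof.
  induction m; simpl.
  - unfold RtoC, Cmult; simpl; f_equal; ring.
  - rewrite IHm. destruct u as [u1 u2]; destruct (cpow (u1, u2) m) as [p q].
    unfold RtoC, Cmult; simpl; f_equal; ring.
Qed.

Lemma LHS_eq N z w :
  let x := Cmult (RtoC (INR N)) (Cmult z (Cconj w)) in
  Cmod (Cminus (cexp x) (KN N z w)) = sqrt (Fc x N 1 ^ 2 + Gc x N 1 ^ 2).
Proof.
  intros x. unfold Cmod. f_equal.
  assert (E1 : fst (Cminus (cexp x) (KN N z w)) = Fc x N 1).
  { replace (fst (Cminus (cexp x) (KN N z w))) with (exp (fst x) * cos (snd x) - fst (KN N z w)) by reflexivity.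
    unfold Fc, Poly, pr. rewrite !Rmult_1_l. f_equal. unfold KN. rewrite fst_csum.
    apply rsum_ext. intros m _. unfold x.
    rewrite cpow_scal. destruct (cpow (Cmult z (Cconj w)) m) as [p q].
    unfold RtoC, Cmult; simpl. rewrite pow1. field. apply INR_fact_neq_0. }
  assert (E2 : snd (Cminus (cexp x) (KN N z w)) = Gc x N 1).
  { replace (snd (Cminus (cexp x) (KN N z w))) with (exp (fst x) * sin (snd x) - snd (KN N z w)) by reflexivity.
    unfold Gc, Poly, pim. rewrite !Rmult_1_l. f_equal. unfold KN. rewrite snd_csum.
    apply rsum_ext. intros m _. unfold x.
    rewrite cpow_scal. destruct (cpow (Cmult z (Cconj w)) m) as [p q].
    unfold RtoC, Cmult; simpl. rewrite pow1. field. apply INR_fact_neq_0. }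
  rewrite E1, E2. reflexivity.
Qed.

Lemma exp_mul_nat y N : exp (INR N * y) = exp y ^ N.
Proof.
  induction N. simpl. rewrite Rmult_0_l, exp_0; auto.
  rewrite S_INR. replace ((INR N + 1) * y) with (INR N * y + y) by ring.
  rewrite exp_plus, IHN. simpl. ring.
Qed.

Lemma mono r rho : 0 <= r <= rho -> rho <= 1 -> r * exp (1 - r) <= rho * exp (1 - rho).
Proof.
  intros H1 H2. set (d := rho - r).
  replace (1 - r) with ((1 - rho) + d) by (unfold d; ring).
  rewrite exp_plus.
  assert (0 < exp (1 - rho)) by apply exp_pos.
  assert (r * exp d <= rho).
  { pose proof (exp_ineq1_le d). pose proof (exp_ineq1_le (-d)).
    assert (exp (-d) * exp d = 1) by (rewrite <- exp_plus; replace (-d + d) with 0 by ring; apply exp_0).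
    assert (0 <= d) by (unfold d; lra). assert (0 < exp d) by apply exp_pos.
    assert ((1 - d) * exp d <= 1) by nra.
    assert (r <= 1 - d) by (unfold d; lra).
    assert (r * (exp d - 1) <= (1 - d) * (exp d - 1)) by nra.
    unfold d in *; nra. }
  nra.
Qed.

Lemma delta0_lt rho : 0 < rho < 1 -> rho * exp (1 - rho) < 1.
Proof.
  intros H. pose proof (exp_ineq1 (rho - 1)).
  assert (exp (1 - rho) * exp (rho - 1) = 1) by (rewrite <- exp_plus; replace (1 - rho + (rho - 1)) with 0 by ring; apply exp_0).
  assert (1 + (rho - 1) < exp (rho - 1)) by (apply H0; lra).
  pose proof (exp_pos (1 - rho)). nra.
Qed.

Lemma bern a N : 0 <= a -> 1 + INR N * a <= (1 + a) ^ N.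
Proof.
  intros Ha; induction N. simpl; lra.
  rewrite S_INR; simpl. assert (0 <= INR N) by apply pos_INR. nra.
Qed.

Lemma fact_bound N : INR N ^ N / INR (fact N) <= exp (INR N).
Proof.
  destruct N. simpl. rewrite exp_0. lra.
  pose proof (exp_ge_taylor (INR (S N)) (S N) (pos_INR _)).
  rewrite tech5 in H. cbv beta in H.
  assert (0 <= sum_f_R0 (fun k : nat => INR (S N) ^ k / INR (fact k)) N).
  { apply cond_pos_sum. intros; apply Rmult_le_pos. apply pow_le, pos_INR.
    apply Rlt_le, Rinv_0_lt_compat, INR_fact_lt_0. }
  lra.
Qed.

Theorem lemma4p5 :
  forall lam : R, 0 < lam < 1 ->
  exists Cst delta : R, 0 < Cst /\ 0 < delta < 1 /\
    forall (N : nat) (z w : C), (1 <= N)%nat ->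
      Cmod z < lam -> Cmod w < lam ->
      Cmod (Cminus (cexp (Cmult (RtoC (INR N)) (Cmult z (Cconj w)))) (KN N z w))
        <= Cst * (exp (INR N * Cmod (Cmult z (Cconj w))) / sqrt (INR N)) * delta ^ N.
Proof.
  intros lam Hlam.
  set (rho := lam * lam).
  assert (Hrho : 0 < rho < 1) by (unfold rho; nra).
  set (d0 := rho * exp (1 - rho)).
  assert (Hd0 : 0 < d0 < 1).
  { split. unfold d0; apply Rmult_lt_0_compat; [lra|apply exp_pos]. apply delta0_lt; auto. }
  set (d := (1 + d0) / 2).
  assert (Hd : d0 < d < 1) by (unfold d; lra).
  set (a := d / d0 - 1).
  assert (Ha : 0 < a).
  { unfold a. assert (1 < d / d0). { apply Rmult_lt_reg_r with d0. lra. unfold Rdiv. rewrite Rmult_assoc, Rinv_l; lra. } lra. }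
  exists (1 / ((1 - rho) * a)), d.
  split. { apply Rdiv_lt_0_compat. lra. apply Rmult_lt_0_compat; lra. }
  split. { lra. }
  intros N z w HN Hz Hw.
  assert (HL := LHS_eq N z w); cbv zeta in HL; rewrite HL; clear HL.
  set (u := Cmult z (Cconj w)).
  set (r := Cmod u).
  assert (Hr : 0 <= r < rho).
  { unfold r, u. rewrite Cmod_mult, Cmod_conj. pose proof (Cmod_ge_0 z). pose proof (Cmod_ge_0 w).
    unfold rho. split. nra. nra. }
  set (x := Cmult (RtoC (INR N)) u).
  assert (Hx : Cmod x = INR N * r).
  { unfold x. rewrite Cmod_mult, Cmod_R, Rabs_pos_eq; auto. apply pos_INR. }
  assert (HNpos : 1 <= INR N) by (apply (le_INR 1); auto).
  assert (S1 : sqrt (Fc x N 1 ^ 2 + Gc x N 1 ^ 2) <= gc x N 1) by (apply main_cmp; lra).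
  assert (S2 : gc x N 1 <= (INR N * r) ^ N / INR (fact N) / (1 - r)).
  { unfold gc. rewrite Rmult_1_l. rewrite Hx. apply tail_bound. lra. split. nra. lra. }
  assert (S3 : (INR N * r) ^ N / INR (fact N) <= r ^ N * exp (INR N)).
  { rewrite Rpow_mult_distr. pose proof (fact_bound N).
    replace (INR N ^ N * r ^ N / INR (fact N)) with (r ^ N * (INR N ^ N / INR (fact N))) by (unfold Rdiv; ring).
    apply Rmult_le_compat_l; auto. apply pow_le; lra. }
  assert (S4 : r ^ N * exp (INR N) = exp (INR N * r) * (r * exp (1 - r)) ^ N).
  { assert (E : exp (INR N) = exp (INR N * r) * exp (INR N * (1 - r))) by (rewrite <- exp_plus; f_equal; ring).
    rewrite Rpow_mult_distr, <- exp_mul_nat, E. ring. }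
  assert (S5 : (r * exp (1 - r)) ^ N <= d0 ^ N).
  { apply pow_incr. split. apply Rmult_le_pos; [lra| apply Rlt_le, exp_pos].
    apply mono; lra. }
  assert (A : sqrt (Fc x N 1 ^ 2 + Gc x N 1 ^ 2) <= exp (INR N * r) * d0 ^ N / (1 - rho)).
  { assert (0 < exp (INR N * r)) by apply exp_pos.
    assert (0 <= (INR N * r) ^ N / INR (fact N)).
    { apply Rmult_le_pos. apply pow_le; nra. apply Rlt_le, Rinv_0_lt_compat, INR_fact_lt_0. }
    assert (0 <= d0 ^ N) by (apply pow_le; lra).
    assert ((INR N * r) ^ N / INR (fact N) / (1 - r) <= (INR N * r) ^ N / INR (fact N) / (1 - rho)).
    { unfold Rdiv at 2 3. apply Rmult_le_compat_l; auto. apply Rinv_le_contravar; lra. }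
    assert ((INR N * r) ^ N / INR (fact N) <= exp (INR N * r) * d0 ^ N).
    { rewrite S4 in S3. apply Rle_trans with (1 := S3). apply Rmult_le_compat_l; lra. }
    assert ((INR N * r) ^ N / INR (fact N) / (1 - rho) <= exp (INR N * r) * d0 ^ N / (1 - rho)).
    { unfold Rdiv. apply Rmult_le_compat_r; auto. apply Rlt_le, Rinv_0_lt_compat; lra. }
    lra. }
  assert (HsN : 0 < sqrt (INR N)) by (apply sqrt_lt_R0; lra).
  assert (HsN2 : sqrt (INR N) <= INR N).
  { rewrite <- (sqrt_square (INR N)) at 2 by lra. apply sqrt_le_1_alt. nra. }
  assert (B : d0 ^ N * sqrt (INR N) * a <= d ^ N).
  { replace d with (d0 * (1 + a)) by (unfold a; field; lra).
    rewrite Rpow_mult_distr. pose proof (bern a N (Rlt_le _ _ Ha)).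
    assert (0 < d0 ^ N) by (apply pow_lt; lra).
    assert (sqrt (INR N) * a <= (1 + a) ^ N) by nra.
    rewrite Rmult_assoc. apply Rmult_le_compat_l; lra. }
  apply Rle_trans with (1 := A).
  set (K := exp (INR N * r) / ((1 - rho) * a * sqrt (INR N))).
  assert (HK : 0 < K).
  { unfold K. apply Rdiv_lt_0_compat. apply exp_pos. apply Rmult_lt_0_compat; [apply Rmult_lt_0_compat|]; lra. }
  replace (exp (INR N * r) * d0 ^ N / (1 - rho)) with (K * (d0 ^ N * sqrt (INR N) * a))
    by (unfold K; field; repeat split; lra).
  replace (1 / ((1 - rho) * a) * (exp (INR N * r) / sqrt (INR N)) * d ^ N) with (K * d ^ N)
    by (unfold K; field; repeat split; lra).
  apply Rmult_le_compat_l; lra.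
Qed.
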